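(* For any integer $d\ge1$, the number of partial orders on $\{1,\dots,n\}$ of dimension at most $d$ equals $n^{(d+o(1))n}$.
   Context: The dimension of a partial order $\prec$ on $\{1,\dots,n\}$ is the minimum integer $d$ such that there are points $a_1,\dots,a_n\in\mathbb{R}^d$, $a_i=(a_i^{(1)},\dots,a_i^{(d)})$, with $a_i^{(\ell)}\neq a_j^{(\ell)}$ for all distinct $i,j$ and all $\ell$, and such that for distinct $i,j$ we have $i\prec j$ iff $a_i^{(\ell)}\le a_j^{(\ell)}$ for all $\ell=1,\dots,d$. ''Equals $n^{(c+o(1))n}$'' means equals $n^{(c+\varepsilon(n))n}$ for some function $\varepsilon(n)\to0$ as $n\to\infty$ (for fixed $d$). *)

(* Defs.v *)
From mathcomp Require Import all_boot.
From Stdlib Require Import Reals ClassicalEpsilon.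
Set Implicit Arguments. Unset Strict Implicit. Unset Printing Implicit Defensive.

Definition pbool (P : Prop) : bool :=
  if excluded_middle_informative P then true else false.

(* A (non-strict) partial order on {1..n} (encoded as 'I_n), given as a set of pairs
   (i, j) meaning i ≼ j. *)
Definition is_partial_order (n : nat) (P : {set 'I_n * 'I_n}) : Prop :=
  (forall i, (i, i) \in P) /\
  (forall i j, (i, j) \in P -> (j, i) \in P -> i = j) /\
  (forall i j k, (i, j) \in P -> (j, k) \in P -> (i, k) \in P).

Definition realizes (n d : nat) (P : {set 'I_n * 'I_n}) (a : 'I_n -> 'I_d -> R) : Prop :=
  (forall (l : 'I_d) (i j : 'I_n), i <> j -> a i l <> a j l) /\
  (forall i j : 'I_n, i <> j ->
     ((i, j) \in P <-> forall l : 'I_d, Rle (a i l) (a j l))).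

Definition dim_le (n d : nat) (P : {set 'I_n * 'I_n}) : Prop :=
  exists d' : nat, (d' <= d)%N /\ exists a : 'I_n -> 'I_d' -> R, realizes P a.

Definition num_po_dim_le (n d : nat) : nat :=
  #|[set P : {set 'I_n * 'I_n} | pbool (is_partial_order P /\ dim_le d P)]|.

(* Main.v *)
Require Import Defs.
From mathcomp Require Import all_boot.
From Stdlib Require Import Reals ClassicalEpsilon Rbase Rseries.
From mathcomp Require Import zify.
From Stdlib Require Import Lra.
Set Implicit Arguments. Unset Strict Implicit. Unset Printing Implicit Defensive.

Lemma pboolP (P : Prop) : pbool P = true <-> P.
Proof. rewrite /pbool; case: excluded_middle_informative => //. Qed.

Definition PO_of n d (c : 'I_n -> 'I_d -> nat) : {set 'I_n * 'I_n} :=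
  [set ij | (ij.1 == ij.2) || [forall l, c ij.1 l <= c ij.2 l]].

Definition target n d := [set P : {set 'I_n * 'I_n} | pbool (is_partial_order P /\ dim_le d P)].

Lemma PO_of_in n d (c : 'I_n -> 'I_d -> nat) : 0 < d ->
  (forall l i j, i <> j -> c i l <> c j l) -> PO_of c \in target n d.
Proof.
move=> d0 dist; rewrite inE; apply/pboolP; split.
  split; first by move=> i; rewrite inE eqxx.
  split.
    move=> i j; rewrite !inE /=; case: eqP => [//|ne] /= /forallP H1.
    case: eqP => [->//|_] /= /forallP H2.
    exfalso; apply: (dist (Ordinal d0) i j ne).
    by apply/eqP; rewrite eqn_leq H1 H2.
  move=> i j k; rewrite !inE /=.
  case: eqP => [->//|_] /= /forallP H1.
  case: eqP => [<-|_] /=; first by move=> _; apply/orP; right; apply/forallP.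
  move/forallP => H2.
  apply/orP; right; apply/forallP => l; exact: leq_trans (H1 l) (H2 l).
exists d; split => //; exists (fun i l => INR (c i l)); split.
  by move=> l i j ne E; apply: (dist l i j ne); apply: INR_eq.
move=> i j ne; rewrite inE /=; case: eqP => [//|_] /=; split.
  by move/forallP => H l; apply: le_INR; apply/leP.
by move=> H; apply/forallP => l; apply/leP; apply: INR_le.
Qed.

Lemma num_gt0 n d : 0 < d -> 0 < num_po_dim_le n d.
Proof.
move=> d0; apply/card_gt0P; exists (PO_of (fun (i : 'I_n) (l : 'I_d) => val i)).
apply: PO_of_in => // l i j ne E; apply: ne; exact: val_inj.
Qed.

Section Lower.
Variables (n d k : nat).
Implicit Type g : {ffun 'I_(n - d*k) * 'I_d -> 'I_k}.

Definition gv g (i : nat) (l : 'I_d) : nat :=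
  match @insub _ (fun x => x < n - d*k) _ (i - d*k) with Some x => g (x, l) | None => 0 end.

Definition cfun g (i : 'I_n) (l : 'I_d) : nat :=
  if i < d*k then (if val l == i %/ k then 2*n*(i %% k).+1 else i)
  else 2*n*(gv g i l).+1 + i.

Lemma modA a i : i < 2*n -> (2*n*a + i) %% (2*n) = i.
Proof. by move=> h; rewrite mulnC modnMDl modn_small. Qed.

Lemma modB a : (2*n*a) %% (2*n) = 0.
Proof. by rewrite mulnC modnMl. Qed.

Lemma cfun_dist g l (i j : 'I_n) : i <> j -> cfun g i l <> cfun g j l.
Proof.
move=> ne; have hi := ltn_ord i; have hj := ltn_ord j.
have ne' : nat_of_ord i <> nat_of_ord j by move=> E; apply: ne; apply: val_inj.
rewrite /cfun.
case hik: (i < d*k); case hjk: (j < d*k).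
- case: ifP => /eqP el; case: ifP => /eqP el' E.
  + apply: ne'; change (nat_of_ord i = nat_of_ord j); rewrite (divn_eq i k) (divn_eq j k) -el -el'.
    have : (i %% k).+1 = (j %% k).+1.
      have n0 : 0 < 2*n by lia.
      by apply/eqP; rewrite -(eqn_pmul2l n0); apply/eqP.
    by case=> ->.
  + have : 2*n <= 2*n*(i %% k).+1 by rewrite leq_pmulr.
    lia.
  + have : 2*n <= 2*n*(j %% k).+1 by rewrite leq_pmulr.
    lia.
  + by apply: ne'.
- move: hjk => /negbT; rewrite -leqNgt => hjk.
  case: ifP => /eqP el E.
  + have := congr1 (modn^~ (2*n)) E => /=; rewrite modB modA; lia.
  + have : 2*n <= 2*n*(gv g j l).+1 by rewrite leq_pmulr.
    lia.
- move: hik => /negbT; rewrite -leqNgt => hik.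
  case: ifP => /eqP el E.
  + have := congr1 (modn^~ (2*n)) E => /=; rewrite modB modA; lia.
  + have : 2*n <= 2*n*(gv g i l).+1 by rewrite leq_pmulr.
    lia.
- move=> E; have := congr1 (modn^~ (2*n)) E => /=; rewrite !modA; lia.
Qed.

Lemma mem_skel g (x : 'I_(n - d*k)) (l : 'I_d) t (ht : t < k) (i j : 'I_n) :
  nat_of_ord i = x + d*k -> nat_of_ord j = l*k + t ->
  ((j, i) \in PO_of (cfun g)) = (t <= g (x, l)).
Proof.
move=> Ei Ej.
have hx := ltn_ord x; have hl := ltn_ord l; have hi := ltn_ord i.
have k0 : 0 < k by lia.
have hjd : j < d*k.
  rewrite Ej; apply: (@leq_trans (l.+1 * k)); first by rewrite mulSn; lia.
  by rewrite leq_mul2r hl orbT.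
have gvE l' : gv g i l' = g (x, l').
  rewrite /gv Ei addnK; case: insubP => [y _ ey|]; last by rewrite ltn_ord.
  by congr (nat_of_ord (g (_, _))); apply: val_inj.
have jdiv : j %/ k = l by rewrite Ej divnMDl // divn_small // addn0.
have jmod : j %% k = t by rewrite Ej modnMDl modn_small.
rewrite inE /=.
have -> : (j == i) = false by apply/eqP => E; move: (congr1 (@nat_of_ord _) E); lia.
rewrite /=.
have cj l' : cfun g j l' = if nat_of_ord l' == nat_of_ord l then 2*n*t.+1 else j.
  by rewrite /cfun hjd jdiv jmod.
have ci l' : cfun g i l' = 2*n*(g (x, l')).+1 + i.
  by rewrite /cfun ifF ?gvE //; lia.
apply/forallP/idP.
  move/(_ l); rewrite cj ci eqxx => H.
  case: (leqP t (g (x, l))) => // H'.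
  have : 2*n*(g (x,l)).+2 <= 2*n*t.+1 by rewrite leq_mul2l ltnS H' orbT.
  rewrite mulnS; lia.
move=> H l'; rewrite cj ci; case: ifP => [/eqP e|_].
  have -> : l' = l by apply: val_inj.
  by apply: leq_trans (leq_addr _ _); rewrite leq_mul2l ltnS H orbT.
have : 2*n <= 2*n*(g (x, l')).+1 by rewrite leq_pmulr.
lia.
Qed.

Lemma G_inj : injective (fun g => PO_of (cfun g)).
Proof.
move=> g h E; apply/ffunP => -[x l].
have hx := ltn_ord x; have hl := ltn_ord l; have hk := ltn_ord (g (x, l)).
have hxi : x + d*k < n by lia.
pose i := Ordinal hxi.
have key t (ht : t < k) : (t <= g (x, l)) = (t <= h (x, l)).
  have hj : l*k + t < n.
    apply: (@leq_trans (l.+1 * k)); first by rewrite mulSn; lia.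
    apply: (@leq_trans (d*k)); last by lia.
    by rewrite leq_mul2r hl orbT.
  pose j := Ordinal hj.
  rewrite -(@mem_skel g x l t ht i j) // -(@mem_skel h x l t ht i j) //.
  by rewrite /= E.
apply: val_inj; apply/eqP; rewrite eqn_leq.
rewrite -key ?leqnn //= key ?leqnn //.
Qed.

Lemma lower_bound : 0 < d -> d*k <= n -> expn k ((n - d*k) * d) <= num_po_dim_le n d.
Proof.
move=> d0 hdk.
have -> : expn k ((n - d*k) * d) = #|{ffun 'I_(n - d*k) * 'I_d -> 'I_k}|.
  by rewrite card_ffun card_prod !card_ord.
rewrite -(card_imset predT G_inj).
rewrite /num_po_dim_le; apply: subset_leq_card; apply/subsetP => P /imsetP [g _ ->].
rewrite -/(target n d); apply: PO_of_in => // l i j ne; exact: cfun_dist.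
Qed.

End Lower.

Definition Sv n (v : 'I_n -> R) (i : 'I_n) : {set 'I_n} := [set x | pbool (v x < v i)%R].

Lemma rank_le n (v : 'I_n -> R) i j : (v i <= v j)%R <-> #|Sv v i| <= #|Sv v j|.
Proof.
split=> H.
  apply: subset_leq_card; apply/subsetP => x; rewrite !inE => /pboolP h.
  apply/pboolP; lra.
case: (Rle_lt_dec (v i) (v j)) => // h; exfalso.
have : Sv v j \proper Sv v i.
  apply/properP; split.
    apply/subsetP => x; rewrite !inE => /pboolP h'; apply/pboolP; lra.
  exists j; rewrite inE; first by apply/pboolP.
  by apply/negP => /pboolP; lra.
move/proper_card; lia.
Qed.

Lemma rank_lt n (v : 'I_n -> R) i : #|Sv v i| < n.
Proof.
have : Sv v i \proper [set: 'I_n].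
  apply/properP; split; first exact: subsetT.
  by exists i; rewrite ?inE //; apply/negP => /pboolP; lra.
by move/proper_card; rewrite cardsT card_ord.
Qed.

Lemma upper_bound n d : 0 < d -> 1 < n -> num_po_dim_le n d <= expn n (n*d).
Proof.
move=> d0 n1.
have -> : expn n (n*d) = #|{ffun 'I_n * 'I_d -> 'I_n}|.
  by rewrite card_ffun card_prod !card_ord.
pose F (f : {ffun 'I_n * 'I_d -> 'I_n}) := PO_of (fun i l => nat_of_ord (f (i, l))).
apply: (leq_trans _ (leq_imset_card F predT)).
apply: subset_leq_card; apply/subsetP => P; rewrite inE => /pboolP [po [d' [hd' [a [adist areal]]]]].
case: d' hd' a adist areal => [|d'] hd' a adist areal.
  exfalso.
  have h0 : 0 < n by lia.
  pose i0 := Ordinal h0; pose i1 := Ordinal n1.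
  have ne : i0 <> i1 by move=> E; move: (congr1 (@nat_of_ord _) E).
  have ne' : i1 <> i0 by move=> E; move: (congr1 (@nat_of_ord _) E).
  have H1 : (i0, i1) \in P by apply/(areal _ _ ne) => -[].
  have H2 : (i1, i0) \in P by apply/(areal _ _ ne') => -[].
  by apply: ne; case: po => _ [anti _]; apply: anti.
pose l0 : 'I_d'.+1 := ord0.
pose pad (l : 'I_d) : 'I_d'.+1 := insubd l0 (nat_of_ord l).
pose rk i l := Ordinal (rank_lt (fun x => a x (pad l)) i).
apply/imsetP; exists [ffun il => rk il.1 il.2] => //.
apply/setP => -[i j]; rewrite inE /=.
case: (eqVneq i j) => [<-|ne].
  by case: po => refl _; rewrite refl.
rewrite /=; apply/idP/forallP.
  move/(areal _ _ (elimN eqP ne)) => H l; rewrite !ffunE /=.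
  by apply/rank_le.
move=> H; apply/(areal _ _ (elimN eqP ne)) => m.
have hm : (nat_of_ord m <= d)%coq_nat.
  by apply/leP; have := ltn_ord m; lia.
have hmd : nat_of_ord m < d by have := ltn_ord m; lia.
have pm : pad (Ordinal hmd) = m.
  apply: val_inj; rewrite /= val_insubd /= ifT //; exact: ltn_ord.
move: (H (Ordinal hmd)); rewrite !ffunE /= pm.
by move/rank_le.
Qed.

Lemma num1 d : 0 < d -> num_po_dim_le 1 d = 1.
Proof.
move=> d0; apply/eqP; rewrite eqn_leq num_gt0 // andbT.
rewrite /num_po_dim_le; apply: (@leq_trans #|[set [set: 'I_1 * 'I_1]]|); last by rewrite cards1.
apply: subset_leq_card.
apply/subsetP => P; rewrite !inE => /pboolP [[refl _] _].
apply/eqP/setP => -[i j]; rewrite inE.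
by rewrite (ord1 i) (ord1 j); apply: refl.
Qed.
Lemma INRM a b : INR (a * b) = (INR a * INR b)%R.
Proof. by rewrite -multE mult_INR. Qed.
Lemma INRD a b : INR (a + b) = (INR a + INR b)%R.
Proof. by rewrite -plusE plus_INR. Qed.
Lemma INRX a b : INR (expn a b) = (INR a ^ b)%R.
Proof. elim: b => [|b IH]; first by rewrite expn0. by rewrite expnS INRM IH. Qed.
Lemma INR_lt0 a : 0 < a -> (0 < INR a)%R.
Proof. by move=> h; apply: lt_0_INR; apply/ltP. Qed.
Lemma INR_leq a b : a <= b -> (INR a <= INR b)%R.
Proof. by move=> h; apply: le_INR; apply/leP. Qed.
Lemma lnle x y : (0 < x)%R -> (x <= y)%R -> (ln x <= ln y)%R.
Proof.
move=> h0 h; case: (Rle_lt_or_eq_dec _ _ h) => [h'|->]; last lra.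
by apply: Rlt_le; apply: ln_increasing.
Qed.

Lemma real_lower (d q n D L c lnk lnN eps : R) :
  (0 < eps)%R -> (0 < d)%R -> (1 <= q)%R -> (2 * d < eps * q)%R -> (0 < n)%R ->
  (0 <= D)%R -> (D * q <= n)%R -> (L - c <= lnk)%R -> (0 <= c)%R -> (c <= L)%R ->
  (d * (n - D) * lnk <= lnN)%R -> (2 * d * c < eps * L)%R -> (0 < L)%R ->
  (- eps < lnN / (n * L) - d)%R.
Proof.
move=> he hd hq hdq hn hD hDq hk hc hcL hN hL hL0.
have hnD : (0 <= n - D)%R by nra.
have h1 : (d * (n - D) * (L - c) <= lnN)%R.
  apply: Rle_trans hN; apply: Rmult_le_compat_l => //; nra.
have h2 : (d * (n*q - n) * (L - c) <= d * ((n - D) * q) * (L - c))%R.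
  apply: Rmult_le_compat_r; first lra.
  apply: Rmult_le_compat_l; nra.
have h3 : (d * L < eps * q * L / 2)%R by nra.
have h4 : (d * q * c < eps * q * L / 2)%R by nra.
have h45 : (d * L + d * q * c < eps * q * L)%R by lra.
have h45n : (n * (d * L + d * q * c) < n * (eps * q * L))%R by apply: Rmult_lt_compat_l.
have h1q : (d * (n - D) * (L - c) * q <= lnN * q)%R by apply: Rmult_le_compat_r; lra.
have hdnc : (0 <= d * n * c)%R by apply: Rmult_le_pos; nra.
have h5 : ((d - eps) * n * L * q < lnN * q)%R.
  apply: Rlt_le_trans h1q.
  have -> : (d * (n - D) * (L - c) * q = d * ((n - D) * q) * (L - c))%R by ring.
  apply: Rlt_le_trans h2.
  have -> : (d * (n * q - n) * (L - c) = n*q*d*L - n * (d * L + d * q * c) + d*n*c)%R by ring.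
  have -> : ((d - eps) * n * L * q = n*q*d*L - n * (eps * q * L))%R by ring.
  lra.
have h6 : ((d - eps) * (n * L) < lnN)%R.
  apply: (Rmult_lt_reg_r q); first lra.
  by rewrite -Rmult_assoc.
have hnL : (0 < n * L)%R by nra.
apply/(Rplus_lt_reg_r d); rewrite /Rminus Rplus_assoc Rplus_opp_l Rplus_0_r.
apply/(Rmult_lt_reg_r (n * L)) => //; rewrite Rmult_plus_distr_r.
have -> : (lnN / (n * L) * (n * L) = lnN)%R by field; lra.
nra.
Qed.

Theorem corollary2p15 (d : nat) (hd : (1 <= d)%N) :
  exists eps : nat -> R, Un_cv eps 0%R /\
    forall n : nat, (1 <= n)%N ->
      INR (num_po_dim_le n d) = Rpower (INR n) ((INR d + eps n) * INR n)%R.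
Proof.
pose N n := num_po_dim_le n d.
have hN n : (0 < INR (N n))%R by apply: INR_lt0; apply: num_gt0.
have hd' : (0 < INR d)%R by apply: INR_lt0.
have hL n : 1 < n -> (0 < ln (INR n))%R.
  move=> h; rewrite -ln_1; apply: ln_increasing; first lra.
  by apply: lt_1_INR; apply/ltP.
exists (fun n => if n <= 1 then 0%R else (ln (INR (N n)) / (INR n * ln (INR n)) - INR d)%R).
split; last first.
  move=> n hn; case: ifP => hn1.
    have -> : n = 1 by lia.
    by rewrite /N num1 // /Rpower /= ln_1 Rmult_0_r exp_0.
  have hn2 : 1 < n by lia.
  have hn0 : (0 < INR n)%R by apply: INR_lt0; lia.
  have hLn := hL n hn2.
  rewrite /Rpower.
  have -> : ((INR d + (ln (INR (N n)) / (INR n * ln (INR n)) - INR d)) * INR n * ln (INR n)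
     = ln (INR (N n)))%R by field; lra.
  by rewrite exp_ln.
move=> eps he.
have [q0 hq0] := INR_unbounded (2 * INR d / eps).
pose q := q0.+1.
have hq1 : (1 <= INR q)%R by apply: (INR_leq (a:=1)) => //=; rewrite ltnS.
have hq : (2 * INR d < eps * INR q)%R.
  have : (INR q0 <= INR q)%R by apply: INR_leq; lia.
  have : (2 * INR d / eps * eps = 2 * INR d)%R by field; lra.
  nra.
pose c := ln (INR (2 * d * q)).
have h2dq : 0 < 2 * d * q by rewrite !muln_gt0 hd.
have hc : (0 <= c)%R.
  rewrite /c -ln_1; apply: lnle; first lra.
  by apply: (INR_leq (a:=1)).
pose B := (2 * INR d * c / eps)%R.
have [m hm] := INR_unbounded (exp B).
exists (maxn 2 (maxn (2*d*q) m)) => n /leP hn.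
have hn2 : 1 < n by lia.
have hndq : 2 * d * q <= n by lia.
have hnm : m <= n by lia.
have hn0 : (0 < INR n)%R by apply: INR_lt0; lia.
have hLn := hL n hn2.
rewrite /R_dist ifF; last by lia.
rewrite Rminus_0_r; apply: Rabs_def1.
  have hup : (ln (INR (N n)) <= INR (n * d) * ln (INR n))%R.
    rewrite -ln_pow //; apply: lnle => //.
    by rewrite -INRX; apply: INR_leq; apply: upper_bound.
  have : (ln (INR (N n)) / (INR n * ln (INR n)) <= INR d)%R.
    apply: (Rmult_le_reg_r (INR n * ln (INR n))); first nra.
    have -> : (ln (INR (N n)) / (INR n * ln (INR n)) * (INR n * ln (INR n)) = ln (INR (N n)))%R
      by field; lra.
    by move: hup; rewrite INRM; lra.
  lra.
pose k := n %/ (d * q).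
have hdq0 : 0 < d * q by rewrite muln_gt0 hd.
have hk1 : 0 < k by rewrite /k divn_gt0 //; lia.
have hkq : k * (d * q) <= n by apply: leq_divM.
have hnk : n <= 2 * d * q * k.
  have := ltn_ceil n hdq0; rewrite -/k mulSn; nia.
have hdk : d * k <= n by nia.
have hlow := lower_bound hd hdk.
have hk0 : (0 < INR k)%R by apply: INR_lt0.
have hlnN : (INR d * (INR n - INR (d * k)) * ln (INR k) <= ln (INR (N n)))%R.
  have -> : (INR d * (INR n - INR (d * k)) = INR ((n - d * k) * d))%R.
    rewrite [INR ((n - d * k) * d)]INRM; have := INRD (n - d * k) (d * k); rewrite subnK // => ->; ring.
  rewrite -ln_pow //; apply: lnle; first exact: pow_lt.
  by rewrite -INRX; apply: INR_leq.
apply: (real_lower (q := INR q) (D := INR (d * k)) (c := c) (lnk := ln (INR k))) => //.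
- exact: pos_INR.
- by rewrite -INRM; apply: INR_leq; nia.
- suff : (ln (INR n) <= c + ln (INR k))%R by lra.
  rewrite /c -ln_mult; last by [].
    by apply: lnle => //; rewrite -INRM; apply: INR_leq.
  by apply: INR_lt0.
- by rewrite /c; apply: lnle => //; [apply: INR_lt0 | apply: INR_leq].
- have : (B < ln (INR n))%R.
    rewrite -{1}(ln_exp B); apply: ln_increasing; first exact: exp_pos.
    have := INR_leq hnm; lra.
  have : (B * eps = 2 * INR d * c)%R by rewrite /B; field; lra.
  nra.
Qed.
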